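(* Let $M=(E,\mathcal{I})$ be a matroid and let $x\in\mathbb{R}^E$ with $x>0$ lie in the base polytope $B(M)$. Then there is a loss matrix $L$ (namely the diagonal matrix with $L_{e,e}=1/x_e$ for $e\in E$) such that $(x,x)$ is a symmetric Nash equilibrium of the matroid game with loss matrix $L$.
   Context: $B(M)=\{x\ge0: x(S)\le r(S)\ \forall S\subseteq E,\ x(E)=r(E)\}$ with $r$ the rank function. In the matroid game with loss matrix $L$, the row player chooses $x\in B(M)$ minimizing $x^TLy$ and the column player chooses $y\in B(M)$ maximizing it; $(x,x)$ is a symmetric Nash equilibrium if $x^TLz\le x^TLx\le z^TLx$ for all $z\in B(M)$. *)

(* Defs.v *)
From mathcomp Require Import all_boot all_order all_algebra.
Set Implicit Arguments. Unset Strict Implicit. Unset Printing Implicit Defensive.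
Import Order.TTheory GRing.Theory Num.Theory.
Local Open Scope ring_scope.

Definition is_matroid (E : finType) (indep : {set E} -> bool) : Prop :=
  [/\ indep set0,
      (forall A B : {set E}, A \subset B -> indep B -> indep A) &
      (forall A B : {set E}, indep A -> indep B -> (#|A| < #|B|)%N ->
         exists2 e, e \in B :\: A & indep (e |: A))].

Definition mrank (E : finType) (indep : {set E} -> bool) (S : {set E}) : nat :=
  \max_(I : {set E} | indep I && (I \subset S)) #|I|.

Definition in_base_polytope (R : realFieldType) (E : finType)
    (indep : {set E} -> bool) (x : E -> R) : Prop :=
  [/\ (forall e, 0 <= x e),
      (forall S : {set E}, \sum_(e in S) x e <= (mrank indep S)%:R) &
      \sum_(e : E) x e = (mrank indep [set: E])%:R].

Definition bilin (R : realFieldType) (E : finType) (x : E -> R)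
    (L : E -> E -> R) (y : E -> R) : R :=
  \sum_(e : E) \sum_(f : E) x e * L e f * y f.

Definition symmetric_NE (R : realFieldType) (E : finType)
    (indep : {set E} -> bool) (L : E -> E -> R) (x : E -> R) : Prop :=
  in_base_polytope indep x /\
  forall z : E -> R, in_base_polytope indep z ->
    bilin x L z <= bilin x L x /\ bilin x L x <= bilin z L x.

(* Main.v *)
Require Import Defs.
From mathcomp Require Import all_boot all_order all_algebra.
Import Order.TTheory GRing.Theory Num.Theory.
Local Open Scope ring_scope.

Lemma bilin_l (R : realFieldType) (E : finType) (x y : E -> R) :
  (forall e, 0 < x e) ->
  bilin x (fun e f => if e == f then (x e)^-1 else 0) y = \sum_e y e.
Proof.
move=> hx; rewrite /bilin; apply: eq_bigr => e _.
rewrite (bigD1 e) //= eqxx big1 ?addr0; last first.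
  by move=> f; rewrite eq_sym => /negbTE ->; rewrite mulr0 mul0r.
by rewrite mulfV ?mul1r // gt_eqF.
Qed.

Lemma bilin_r (R : realFieldType) (E : finType) (x y : E -> R) :
  (forall e, 0 < x e) ->
  bilin y (fun e f => if e == f then (x e)^-1 else 0) x = \sum_e y e.
Proof.
move=> hx; rewrite /bilin; apply: eq_bigr => e _.
rewrite (bigD1 e) //= eqxx big1 ?addr0; last first.
  by move=> f; rewrite eq_sym => /negbTE ->; rewrite mulr0 mul0r.
by rewrite -mulrA mulVf ?mulr1 // gt_eqF.
Qed.

Theorem corollary11 (R : realFieldType) (E : finType) (indep : {set E} -> bool)
    (x : E -> R) :
  is_matroid indep ->
  in_base_polytope indep x ->
  (forall e, 0 < x e) ->
  symmetric_NE indep (fun e f => if e == f then (x e)^-1 else 0) x.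
Proof.
move=> _ hB hx; split => // z hz.
have h1 := @bilin_l R E x z hx; have h2 := @bilin_l R E x x hx; have h3 := @bilin_r R E x z hx.
rewrite /= in h1 h2 h3 *; rewrite h1 h2 h3.
case: hB => _ _ ->; case: hz => _ _ ->; by rewrite lexx.
Qed.
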